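(* Let $H\subset\operatorname{GL}(V)$ be a complex algebraic torus acting on the finite-dimensional space $V$ with $V^H=(0)$, let $v\in V$, and let $G\subset\operatorname{Aff}(V)$ be the subgroup of affine transformations preserving $Hv$. Then (1) $G\subset\operatorname{GL}(V)$; (2) if $v$ is generic, then $G^0=H$.
   Context: $\operatorname{Aff}(V)=\operatorname{GL}(V)\ltimes V$ is the group of affine transformations of $V$. With $V=\bigoplus_i n_iV_i$ the isotypic decomposition under $H$ and $v=(v_{ij})$, $v_{ij}$ the component in the $j$th copy of $V_i$, $v$ is called generic if for each $i$ the vectors $v_{i1},\dots,v_{in_i}$ span an $n_i$-dimensional subspace of $V_i$ (equivalently, $Hv$ spans $V$). $G^0$ denotes the identity component. *)

(* Defs.v *)
(* The complex numbers are modelled as R[i] (mathcomp-real-closed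
   complex) for an arbitrary R : realType; for R = the reals this is C. *)
From HB Require Import structures.
From mathcomp Require Import all_boot all_order all_algebra.
From mathcomp Require Import reals complex.
From mathcomp Require Import mpoly.
Set Implicit Arguments. Unset Strict Implicit. Unset Printing Implicit Defensive.
Import Order.TTheory GRing.Theory Num.Theory.
Local Open Scope ring_scope.
Local Open Scope complex_scope.

Section Defs.
Variables (R : realType) (n : nat).
Local Notation C := (R[i]).
Local Notation Mat := ('M[C]_n).
Local Notation Vec := ('cV[C]_n).

(* An algebraic torus H in GL(V), V = C^n: in a suitable basis (columns of P)
   it is the image of (C^* )^r under diagonal characters t |-> t^(a i). *)
Definition torus_elt r (P : Mat) (a : 'I_n -> 'I_r -> int) (t : 'I_r -> C) : Mat :=
  P *m diag_mx (\row_i \prod_(k < r) (t k) ^ (a i k)) *m invmx P.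

Definition is_torus (H : Mat -> Prop) : Prop :=
  exists (r : nat) (P : Mat) (a : 'I_n -> 'I_r -> int),
    P \in unitmx /\
    forall M, H M <-> exists t : 'I_r -> C, (forall k, t k != 0) /\ M = torus_elt P a t.

Definition no_fixed_vectors (H : Mat -> Prop) : Prop :=
  forall w : Vec, (forall h, H h -> h *m w = w) -> w = 0.

Definition orbit (H : Mat -> Prop) (v : Vec) (w : Vec) : Prop :=
  exists h, H h /\ w = h *m v.

Definition affine_group (g : Mat * Vec) : Prop := g.1 \in unitmx.
Definition aff_act (g : Mat * Vec) (x : Vec) : Vec := g.1 *m x + g.2.

Definition orbit_stabilizer (H : Mat -> Prop) (v : Vec) (g : Mat * Vec) : Prop :=
  affine_group g /\
  forall w, orbit H v w <-> exists x, orbit H v x /\ w = aff_act g x.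

Definition generic (H : Mat -> Prop) (v : Vec) : Prop :=
  forall w : Vec, exists (k : nat) (hs : 'I_k -> Mat) (c : 'I_k -> C),
    (forall j, H (hs j)) /\ w = \sum_(j < k) c j *: (hs j *m v).

(* Zariski topology on Aff(V) (as a subspace of M_n(C) x C^n = C^(n*n+n)) *)
Definition aff_coords (g : Mat * Vec) : 'I_(n * n + n) -> C :=
  fun i => row_mx (mxvec g.1) (g.2)^T 0 i.

Definition zariski_closed (Z : Mat * Vec -> Prop) : Prop :=
  exists F : {mpoly C[n * n + n]} -> Prop,
    forall g, Z g <-> (forall p, F p -> p.@[aff_coords g] = 0).

Definition zariski_connected (Y : Mat * Vec -> Prop) : Prop :=
  forall Z1 Z2, zariski_closed Z1 -> zariski_closed Z2 ->
    (forall g, Y g -> Z1 g \/ Z2 g) ->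
    (forall g, Y g -> Z1 g -> Z2 g -> False) ->
    (forall g, Y g -> Z1 g) \/ (forall g, Y g -> Z2 g).

Definition identity_component (G : Mat * Vec -> Prop) (g : Mat * Vec) : Prop :=
  exists Y : Mat * Vec -> Prop,
    zariski_connected Y /\ (forall x, Y x -> G x) /\ Y (1%:M, 0) /\ Y g.

End Defs.

(* Main.v *)
Require Import Defs.
From HB Require Import structures.
From mathcomp Require Import all_boot all_order all_algebra.
From mathcomp Require Import reals complex.
From mathcomp Require Import mpoly.
From mathcomp Require Import zify ring.
From Stdlib Require Import Classical FunctionalExtensionality PropExtensionality.
Import Order.TTheory GRing.Theory Num.Theory.
Local Open Scope ring_scope.
Set Implicit Arguments. Unset Strict Implicit. Unset Printing Implicit Defensive.

Section L.
Variable F : numClosedFieldType.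


Lemma PZnat (p : {poly F}) : (forall k : nat, p.[k.+1%:R] = 0) -> p = 0.
Proof.
move=> H; apply/eqP; apply/negPn/negP => p0.
have H1 : all (root p) [seq (k.+1)%:R | k <- iota 0 (size p)].
  by apply/allP => x /mapP [k _ ->]; rewrite /root H.
have H2 : uniq [seq ((k.+1)%:R : F) | k <- iota 0 (size p)].
  by rewrite map_inj_uniq ?iota_uniq // => x y /eqP; rewrite eqr_nat => /eqP [].
by have := @max_poly_roots _ p _ p0 H1 H2; rewrite size_map size_iota ltnn.
Qed.

Lemma PZ' (p : {poly F}) : (forall z, z != 0 -> p.[z] = 0) -> p = 0.
Proof. by move=> H; apply: PZnat => k; apply: H; rewrite pnatr_eq0. Qed.

Lemma PZ (p : {poly F}) : (forall z, p.[z] = 0) -> p = 0.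
Proof. by move=> H; apply: PZ' => z _; apply: H. Qed.

Lemma mono (p : {poly F}) : (forall z, z != 0 -> p.[z] != 0) ->
  exists c d, p = c *: 'X^d.
Proof.
move=> H; case: (closed_field_poly_normal p) => rs Ep.
exists (lead_coef p), (size rs); rewrite {1}Ep; congr (_ *: _).
have : all (fun z => z == 0) rs.
  apply/allP => z zin; apply/negPn/negP => z0; have := H z z0.
  rewrite Ep hornerZ horner_prod mulf_eq0 negb_or => /andP [_ /negP]; apply.
  by rewrite prodf_seq_eq0; apply/hasP; exists z => //; rewrite hornerXsubC subrr eqxx.
elim: rs {Ep} => [|x rs IH] /=; first by rewrite big_nil expr0.
by case/andP => /eqP -> /IH; rewrite big_cons => ->; rewrite subr0 exprS.
Qed.


Lemma abs_eq (k l : int) (K : nat) : 0 <= k + K%:Z -> 0 <= l + K%:Z ->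
  (absz (k + K%:Z) == absz (l + K%:Z)) = (k == l).
Proof. by move=> h1 h2; apply/eqP/eqP; lia. Qed.

Lemma laurent N (c0 : F) (c : 'I_N -> F) (m : 'I_N -> int) :
  exists K : nat, exists p : {poly F}, (forall j, 0 <= m j + K%:Z) /\
   (forall z, z != 0 -> z ^+ K * (c0 + \sum_(j < N) c j * z ^ m j) = p.[z]) /\
   (forall k : int, 0 <= k + K%:Z ->
      p`_(absz (k + K%:Z)) = (k == 0)%:R * c0 + \sum_(j < N | m j == k) c j).
Proof.
set K := (\sum_(j < N) absz (m j))%N.
have mK j : 0 <= m j + K%:Z.
  have : (absz (m j) <= K)%N by rewrite /K (bigD1 j) //= leq_addr.
  lia.
exists K, (c0 *: 'X^K + \sum_(j < N) c j *: 'X^(absz (m j + K%:Z))); split; first by [].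
split.
  move=> z z0; rewrite hornerD hornerZ hornerXn horner_sum mulrDr mulrC.
  congr (_ + _); rewrite mulr_sumr; apply: eq_bigr => j _.
  rewrite hornerZ hornerXn mulrCA; congr (_ * _).
  rewrite exprnP -exprzDr ?unitfE // exprnP; congr (_ ^ _).
  by have := mK j; lia.
move=> k kK; rewrite coefD coefZ coefXn coef_sum.
congr (_ + _).
  have -> : (absz (k + K%:Z) == K) = (k == 0).
    by apply/eqP/eqP; lia.
  by rewrite mulrC.
rewrite [RHS]big_mkcond; apply: eq_bigr => j _.
rewrite coefZ coefXn abs_eq // eq_sym.
by case: (m j == k); rewrite ?mulr1 ?mulr0.
Qed.


Definition gam N (c0 : F) (c : 'I_N -> F) (m : 'I_N -> int) (k : int) :=
  (k == 0)%:R * c0 + \sum_(j < N | m j == k) c j.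

Lemma OV0 N (c0 : F) (c : 'I_N -> F) (m : 'I_N -> int) :
  (forall z, z != 0 -> c0 + \sum_(j < N) c j * z ^ m j = 0) ->
  forall k, (k = 0 \/ exists j, m j = k) -> gam c0 c m k = 0.
Proof.
move=> H k hk; have [K [p [mK [Ep Cp]]]] := laurent c0 c m.
have p0 : p = 0 by apply: PZ' => z z0; rewrite -Ep // H // mulr0.
rewrite /gam -Cp ?p0 ?coef0 //.
by case: hk => [->|[j <-]] //; rewrite add0r.
Qed.

Lemma OVmono N (c0 : F) (c : 'I_N -> F) (m : 'I_N -> int) :
  (forall z, z != 0 -> c0 + \sum_(j < N) c j * z ^ m j != 0) ->
  forall k l, k != l -> (k = 0 \/ exists j, m j = k) -> (l = 0 \/ exists j, m j = l) ->
  gam c0 c m k = 0 \/ gam c0 c m l = 0.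
Proof.
move=> H k l kl hk hl; have [K [p [mK [Ep Cp]]]] := laurent c0 c m.
have [d [e Ep']] : exists d e, p = d *: 'X^e.
  apply: mono => z z0; rewrite -Ep // mulf_neq0 ?H // expf_neq0 //.
have hk' : 0 <= k + K%:Z by case: hk => [->|[j <-]] //; rewrite add0r.
have hl' : 0 <= l + K%:Z by case: hl => [->|[j <-]] //; rewrite add0r.
rewrite /gam -!Cp // Ep' !coefZ !coefXn.
case: (absz (k + K%:Z) =P e) => [ek|]; last by left; rewrite mulr0.
right; case: (absz (l + K%:Z) =P e) => [el|]; last by rewrite mulr0.
by exfalso; move/negP: kl; apply; rewrite -(abs_eq hk' hl') ek el.
Qed.

Lemma OVconst N (c0 : F) (c : 'I_N -> F) (m : 'I_N -> int) :
  (forall z, z != 0 -> c0 + \sum_(j < N) c j * z ^ m j != 0) ->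
  gam c0 c m 0 != 0 ->
  forall z, z != 0 -> c0 + \sum_(j < N) c j * z ^ m j = gam c0 c m 0.
Proof.
move=> H g0 z z0; have [K [p [mK [Ep Cp]]]] := laurent c0 c m.
have [d [e Ep']] : exists d e, p = d *: 'X^e.
  apply: mono => y y0; rewrite -Ep // mulf_neq0 ?H // expf_neq0 //.
have C0 : p`_(absz (0 + K%:Z)) = gam c0 c m 0 by rewrite Cp // add0r.
rewrite -C0; move: g0; rewrite -C0 Ep' coefZ coefXn add0r.
case: (absz K%:Z =P e) => [eK|]; last by rewrite mulr0 eqxx.
move=> _; rewrite mulr1; apply: (mulfI (expf_neq0 K z0)).
by rewrite Ep // Ep' hornerZ hornerXn -eK /= mulrC.
Qed.


Lemma LAM (I : finType) r (d : I -> 'I_r -> int) :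
  (forall x, exists k, d x k != 0) ->
  exists lam : 'I_r -> int, forall x, \sum_(k < r) lam k * d x k != 0.
Proof.
move=> nz.
pose q x : {poly F} := \sum_(k < r) (d x k)%:~R *: 'X^k.
have qnz x : q x != 0.
  have [k0 k0nz] := nz x; apply/eqP => /(congr1 (fun p : {poly F} => p`_k0)).
  rewrite coef0 coef_sum (bigD1 k0) //= big1 ?addr0.
    by rewrite coefZ coefXn eqxx mulr1 => /eqP; rewrite intr_eq0 (negPf k0nz).
  move=> k kk0; rewrite coefZ coefXn (_ : (_ == _)%N = false) ?mulr0 //.
  by apply/negP => /eqP/val_inj E; move: kk0; rewrite E eqxx.
have Qnz : \prod_x q x != 0 by apply/prodf_neq0 => x _.
have [M HM] : exists M : nat, (\prod_x q x).[M.+1%:R] != 0.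
  apply: NNPP => nM; move/eqP: Qnz; apply; apply: PZnat => M.
  by apply/eqP; apply/negPn/negP => h; apply: nM; exists M.
exists (fun k => (M.+1 ^ k)%N%:Z) => x.
move: HM; rewrite horner_prod => /prodf_neq0 /(_ x isT).
apply: contra => /eqP hx.
apply/eqP; rewrite /q horner_sum.
transitivity ((\sum_(k < r) (M.+1 ^ k)%N%:Z * d x k)%:~R : F); last by rewrite hx.
rewrite rmorph_sum; apply: eq_bigr => k _.
rewrite hornerZ hornerXn /= rmorphM /= mulrC -natrX; congr (_ * _).
Qed.

End L.

Section Rep.
Variable F : numClosedFieldType.

Definition Rep (Q : {poly F}) (f : F -> F) := exists Dp pp : {poly F},
  (forall z, Q.[z] != 0 -> Dp.[z] != 0) /\ (forall z, Q.[z] != 0 -> Dp.[z] * f z = pp.[z]).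

Lemma Rep_ext Q f g : (forall z, f z = g z) -> Rep Q f -> Rep Q g.
Proof.
move=> E [Dp [pp [h1 h2]]]; exists Dp, pp; split => // z zQ; by rewrite -E h2.
Qed.

Lemma Rep_poly Q p : Rep Q (fun z => p.[z]).
Proof. by exists 1, p; split => z _; rewrite hornerC ?oner_eq0 ?mul1r. Qed.

Lemma Rep_const Q c : Rep Q (fun _ => c).
Proof. by apply: (Rep_ext (f := fun z => (c%:P).[z])) => [z|]; rewrite ?hornerC //; apply: Rep_poly. Qed.

Lemma Rep_add Q f g : Rep Q f -> Rep Q g -> Rep Q (fun z => f z + g z).
Proof.
move=> [D1 [p1 [a1 b1]]] [D2 [p2 [a2 b2]]].
exists (D1 * D2), (p1 * D2 + p2 * D1); split => z zQ.
  by rewrite hornerM mulf_neq0 ?a1 ?a2.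
rewrite hornerD !hornerM -b1 // -b2 //; ring.
Qed.

Lemma Rep_mul Q f g : Rep Q f -> Rep Q g -> Rep Q (fun z => f z * g z).
Proof.
move=> [D1 [p1 [a1 b1]]] [D2 [p2 [a2 b2]]].
exists (D1 * D2), (p1 * p2); split => z zQ.
  by rewrite hornerM mulf_neq0 ?a1 ?a2.
rewrite !hornerM -b1 // -b2 //; ring.
Qed.

Lemma Rep_inv Q p : (forall z, Q.[z] != 0 -> p.[z] != 0) -> Rep Q (fun z => (p.[z])^-1).
Proof.
move=> h; exists p, 1; split => // z zQ; by rewrite hornerC mulfV ?h.
Qed.

Lemma Rep_sum Q (I : Type) (s : seq I) (Fs : I -> F -> F) :
  (forall i, Rep Q (Fs i)) -> Rep Q (fun z => \sum_(i <- s) Fs i z).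
Proof.
move=> h; elim: s => [|x s IH].
  by apply: (Rep_ext (f := fun _ => 0)) => [z|]; rewrite ?big_nil //; apply: Rep_const.
apply: (Rep_ext (f := fun z => Fs x z + \sum_(i <- s) Fs i z)) => [z|]; first by rewrite big_cons.
exact: Rep_add.
Qed.

Lemma Rep_prod Q (I : Type) (s : seq I) (Fs : I -> F -> F) :
  (forall i, Rep Q (Fs i)) -> Rep Q (fun z => \prod_(i <- s) Fs i z).
Proof.
move=> h; elim: s => [|x s IH].
  by apply: (Rep_ext (f := fun _ => 1)) => [z|]; rewrite ?big_nil //; apply: Rep_const.
apply: (Rep_ext (f := fun z => Fs x z * \prod_(i <- s) Fs i z)) => [z|]; first by rewrite big_cons.
exact: Rep_mul.
Qed.

Lemma Rep_expn Q f m : Rep Q f -> Rep Q (fun z => f z ^+ m).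
Proof.
move=> h; elim: m => [|m IH].
  by apply: (Rep_ext (f := fun _ => 1)) => [z|]; rewrite ?expr0 //; apply: Rep_const.
apply: (Rep_ext (f := fun z => f z * f z ^+ m)) => [z|]; first by rewrite exprS.
exact: Rep_mul.
Qed.

Lemma Rep_exprz Q p (e : int) : (forall z, Q.[z] != 0 -> p.[z] != 0) ->
  Rep Q (fun z => p.[z] ^ e).
Proof.
move=> h; case: e => m.
  apply: (Rep_ext (f := fun z => (p ^+ m).[z])) => [z|]; last exact: Rep_poly.
  by rewrite horner_exp -exprnP.
apply: (Rep_ext (f := fun z => ((p ^+ m.+1).[z])^-1)) => [z|].
  by rewrite horner_exp NegzE -exprnN.
by apply: Rep_inv => z zQ; rewrite horner_exp expf_neq0 ?h.
Qed.

End Rep.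

Section Main.
Variables (R : realType) (n r : nat) (P : 'M[R[i]]_n) (a : 'I_n -> 'I_r -> int).
Hypothesis Pu : P \in unitmx.
Local Notation C := (R[i]).

Definition chi (t : 'I_r -> C) (j : 'I_n) : C := \prod_(k < r) t k ^ a j k.
Definition nzt (t : 'I_r -> C) := forall k, t k != 0.
Local Notation T t := (torus_elt P a t).
Definition Hs (M : 'M[C]_n) := exists t, (forall k, t k != 0) /\ M = T t.
Local Notation D t := (diag_mx (\row_j chi t j)).

Lemma chi_neq0 t j : nzt t -> chi t j != 0.
Proof. by move=> nt; apply/prodf_neq0 => k _; apply: expfz_neq0. Qed.

Lemma chi_ext t s j : (forall k, t k = s k) -> chi t j = chi s j.
Proof. by move=> E; apply: eq_bigr => k _; rewrite E. Qed.

Lemma T_ext t s : (forall k, t k = s k) -> T t = T s.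
Proof.
move=> E; rewrite /torus_elt; have -> : (\row_j \prod_(k < r) t k ^ a j k) = \row_j chi s j.
  by apply/rowP => j; rewrite !mxE; apply: chi_ext.
by [].
Qed.

Lemma chiM t s j : nzt t -> nzt s -> chi (fun k => t k * s k) j = chi t j * chi s j.
Proof.
move=> nt ns; rewrite /chi -big_split /=; apply: eq_bigr => k _.
by rewrite exprzMl // unitfE.
Qed.

Lemma chi1 j : chi (fun _ => 1) j = 1.
Proof. by rewrite /chi big1 // => k _; rewrite exp1rz. Qed.

Lemma TE t : T t = P *m D t *m invmx P.
Proof. by rewrite /torus_elt. Qed.

Lemma cancelP m p (X : 'M[C]_(m, n)) (Y : 'M[C]_(n, p)) : X *m invmx P *m P *m Y = X *m Y.
Proof. by rewrite -(mulmxA X) (mulVmx Pu) mulmx1. Qed.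

Lemma conjD (d e : 'rV[C]_n) :
  (P *m diag_mx d *m invmx P) *m (P *m diag_mx e *m invmx P) =
  P *m diag_mx (\row_j (d 0 j * e 0 j)) *m invmx P.
Proof. by rewrite !mulmxA cancelP -(mulmxA P) mulmx_diag. Qed.

Lemma TM t s : nzt t -> nzt s -> T t *m T s = T (fun k => t k * s k).
Proof.
move=> nt ns; rewrite (TE t) (TE s) (TE (fun k => t k * s k)) conjD.
have -> : (\row_j ((\row_j0 chi t j0) 0 j * (\row_j0 chi s j0) 0 j))
   = \row_j chi (fun k => t k * s k) j.
  by apply/rowP => j; rewrite !mxE chiM.
by [].
Qed.

Lemma T1 : T (fun _ => 1) = 1%:M.
Proof.
rewrite TE (_ : diag_mx _ = 1%:M) ?mulmx1 ?(mulmxV Pu) //.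
apply/matrixP => i j; rewrite !mxE chi1; by case: (i == j).
Qed.

Lemma Tunit t : nzt t -> T t \in unitmx.
Proof.
move=> nt; have nt' : nzt (fun k => (t k)^-1) by move=> k; rewrite invr_eq0.
have E : T t *m T (fun k => (t k)^-1) = 1%:M.
  by rewrite TM // -T1; apply: T_ext => k; rewrite mulfV ?nt.
exact: (mulmx1_unit E).1.
Qed.

Lemma Dentry t (w : 'cV[C]_n) j : (D t *m w) j 0 = chi t j * w j 0.
Proof. by rewrite mul_diag_mx !mxE. Qed.

Lemma PinvT t (x : 'cV[C]_n) : invmx P *m (T t *m x) = D t *m (invmx P *m x).
Proof. by rewrite TE !mulmxA (mulVmx Pu) mul1mx -mulmxA. Qed.


Lemma two_pow (z : int) : z != 0 -> (2 : C) ^ z != 1.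
Proof.
have h q : (2 : C) ^+ q.+1 != 1.
  by rewrite -[2]/(2%:R) -natrX pnatr_eq1 expnS; apply/eqP; lia.
case: z => [[|k]|k] //= _; first by rewrite -exprnP.
by rewrite NegzE -exprnN invr_eq1.
Qed.

Lemma TPx (M : 'M[C]_n) (x : 'cV[C]_n) :
  (P *m M *m invmx P) *m (P *m x) = P *m (M *m x).
Proof. by rewrite !mulmxA cancelP -mulmxA. Qed.

Lemma TPv (M : 'M[C]_n) (x : 'cV[C]_n) :
  (P *m M *m invmx P) *m x = P *m (M *m (invmx P *m x)).
Proof. by rewrite !mulmxA. Qed.

Lemma nofix_a : no_fixed_vectors Hs -> forall j, exists k, a j k != 0.
Proof.
move=> nf j; apply: NNPP => hn.
have a0 : forall k, a j k = 0.
  move=> k; apply/eqP; apply: negbNE; apply/negP => h; apply: hn; exists k; exact h.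
pose e : 'cV[C]_n := delta_mx j 0.
have E1 t : D t *m e = e.
  apply/matrixP => k l; rewrite mul_diag_mx !mxE.
  case: (k =P j) => [->|/eqP kj].
    by rewrite /chi big1 ?mul1r // => q _; rewrite a0 expr0z.
  by rewrite /= mulr0.
have Pe0 : P *m e = 0.
  apply: nf => h [t [nt ->]]; by rewrite TE TPx E1.
have : e = 0 by rewrite -(mulKmx Pu e) Pe0 mulmx0.
move/(congr1 (fun M : 'cV[C]_n => M j 0)); rewrite !mxE !eqxx /=.
by move/eqP; rewrite oner_eq0.
Qed.

Lemma chi_curve (lam : 'I_r -> int) s z j : nzt s -> z != 0 ->
  chi (fun k => s k * z ^ lam k) j = chi s j * z ^ (\sum_(k < r) lam k * a j k).
Proof.
move=> ns z0; have zu : z \is a GRing.unit by rewrite unitfE.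
rewrite (big_morph (fun e => z ^ e) (exprzDr zu) (expr0z z)) /chi -big_split /=.
apply: eq_bigr => k _; by rewrite exprzMl ?unitfE ?expfz_neq0 ?ns // exprz_exp.
Qed.

Lemma curve_nz (lam : 'I_r -> int) s z : nzt s -> z != 0 -> nzt (fun k => s k * z ^ lam k).
Proof. by move=> ns z0 k; rewrite mulf_neq0 // expfz_neq0. Qed.

Lemma ones_nz : nzt (fun _ => 1).
Proof. by move=> k; rewrite oner_eq0. Qed.

Lemma reassoc (A : 'M[C]_n) (X : 'cV[C]_n) :
  invmx P *m (A *m (P *m X)) = (invmx P *m A *m P) *m X.
Proof. by rewrite !mulmxA. Qed.

Lemma yeq (v : 'cV[C]_n) (A : 'M[C]_n) (b : 'cV[C]_n) t s :
  A *m (T t *m v) + b = T s *m v -> forall i,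
  (invmx P *m b) i 0 + \sum_j ((invmx P *m A *m P) i j * (invmx P *m v) j 0) * chi t j
   = chi s i * (invmx P *m v) i 0.
Proof.
move=> E i; have := congr1 (fun M => (invmx P *m M) i 0) E.
rewrite /=. rewrite PinvT. rewrite Dentry. rewrite mulmxDr. rewrite mxE. rewrite (TE t). rewrite TPv.
rewrite reassoc.
move=> <-; rewrite addrC; congr (_ + _); rewrite [RHS]mxE; apply: eq_bigr => j _.
by rewrite Dentry -!mulrA [chi t j * _]mulrC.
Qed.

Lemma part1 (v : 'cV[C]_n) (A : 'M[C]_n) (b : 'cV[C]_n) :
  no_fixed_vectors Hs ->
  (forall x, Defs.orbit Hs v x <-> exists y, Defs.orbit Hs v y /\ x = A *m y + b) -> b = 0.
Proof.
move=> nf Horb.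
pose y i t := (invmx P *m b) i 0 +
   \sum_j ((invmx P *m A *m P) i j * (invmx P *m v) j 0) * chi t j.
have Y1 i t : nzt t -> exists s, nzt s /\ y i t = chi s i * (invmx P *m v) i 0.
  move=> nt; have : Defs.orbit Hs v (A *m (T t *m v) + b).
    apply/Horb; exists (T t *m v); split => //; exists (T t); split => //.
    by exists t; split.
  case=> h [[s [ns ->]] E]; exists s; split => //; exact: yeq E i.
have Y2 i s : nzt s -> exists t, nzt t /\ y i t = chi s i * (invmx P *m v) i 0.
  move=> ns; have : Defs.orbit Hs v (T s *m v).
    by exists (T s); split => //; exists s; split.
  move/Horb => [x [[h [[t [nt ->]] ->]] E]].
  by exists t; split => //; apply: yeq (esym E) i.
have [lam hlam] := @LAM C _ _ (fun j k => a j k) (nofix_a nf).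
pose m j := \sum_(k < r) lam k * a j k.
have Fy i s z : nzt s -> z != 0 -> y i (fun k => s k * z ^ lam k) =
   (invmx P *m b) i 0 + \sum_j ((invmx P *m A *m P) i j * (invmx P *m v) j 0 * chi s j) * z ^ m j.
  move=> ns z0; rewrite /y; congr (_ + _); apply: eq_bigr => j _.
  by rewrite chi_curve // mulrA.
have gam0 c0 (c : 'I_n -> C) : gam c0 c m 0 = c0.
  rewrite /gam eqxx mul1r big_pred0 ?addr0 // => j; exact: negbTE (hlam j).
have b'0 i : (invmx P *m b) i 0 = 0.
  case: (eqVneq ((invmx P *m v) i 0) 0) => [w0|w0].
    have := @OV0 C n ((invmx P *m b) i 0)
      (fun j => (invmx P *m A *m P) i j * (invmx P *m v) j 0 * chi (fun _ => 1) j) m _ 0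
      (or_introl erefl).
    rewrite gam0; apply => z z0; rewrite -(Fy i _ z ones_nz z0).
    have [s [_ ->]] := Y1 i _ (curve_nz lam ones_nz z0); by rewrite w0 mulr0.
  apply: NNPP => bn.
  have yc t : nzt t -> y i t = (invmx P *m b) i 0.
    move=> nt.
    pose c j := (invmx P *m A *m P) i j * (invmx P *m v) j 0 * chi t j.
    have nv : forall z, z != 0 -> (invmx P *m b) i 0 + \sum_j c j * z ^ m j != 0.
      move=> zz zz0; rewrite -Fy //.
      have [s [ns ->]] := Y1 i _ (curve_nz lam nt zz0); apply: mulf_neq0; [exact: chi_neq0 i ns | exact: w0].
    have g0 : gam ((invmx P *m b) i 0) c m 0 != 0.
      by rewrite gam0; apply/negP => /eqP.
    have := OVconst nv g0 (oner_neq0 _); rewrite gam0 => <-.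
    rewrite /y; congr (_ + _); apply: eq_bigr => j _; by rewrite exp1rz mulr1.
  have [t1 [nt1 E1]] := Y2 i _ ones_nz; rewrite yc // chi1 mul1r in E1.
  have [k0 hk0] := nofix_a nf i.
  pose s2 k : C := if k == k0 then 2 else 1.
  have ns2 : nzt s2 by move=> k; rewrite /s2; case: (k == k0); rewrite ?oner_eq0 ?pnatr_eq0.
  have c2 : chi s2 i = 2 ^ a i k0.
    rewrite /chi (bigD1 k0) //= /s2 eqxx big1 ?mulr1 // => k kk0.
    by rewrite (negPf kk0) exp1rz.
  have [t2 [nt2 E2]] := Y2 i _ ns2; rewrite yc // c2 E1 in E2.
  have e : 2 ^ a i k0 = (1 : C) by apply: (mulIf w0); rewrite mul1r -E2.
  by move: (two_pow hk0); rewrite e eqxx.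
rewrite -(mulKVmx Pu b) (_ : invmx P *m b = 0) ?mulmx0 //.
by apply/matrixP => i j; rewrite ord1 b'0 mxE.
Qed.

Definition yv (v : 'cV[C]_n) (A : 'M[C]_n) (b : 'cV[C]_n) i t :=
  (invmx P *m b) i 0 + \sum_j ((invmx P *m A *m P) i j * (invmx P *m v) j 0) * chi t j.

Lemma Y1L (v : 'cV[C]_n) (A : 'M[C]_n) (b : 'cV[C]_n) :
  (forall x, Defs.orbit Hs v x <-> exists y, Defs.orbit Hs v y /\ x = A *m y + b) ->
  forall i t, nzt t -> exists s, nzt s /\ yv v A b i t = chi s i * (invmx P *m v) i 0.
Proof.
move=> Horb i t nt; have : Defs.orbit Hs v (A *m (T t *m v) + b).
  apply/Horb; exists (T t *m v); split => //; exists (T t); split => //.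
  by exists t; split.
case=> h [[s [ns ->]] E]; exists s; split => //; exact: yeq E i.
Qed.

Lemma FyL (v : 'cV[C]_n) (A : 'M[C]_n) (b : 'cV[C]_n) lam i s z :
  nzt s -> z != 0 -> yv v A b i (fun k => s k * z ^ lam k) =
   (invmx P *m b) i 0 + \sum_j ((invmx P *m A *m P) i j * (invmx P *m v) j 0 * chi s j)
      * z ^ (\sum_(k < r) lam k * a j k).
Proof.
move=> ns z0; rewrite /yv; congr (_ + _); apply: eq_bigr => j _.
by rewrite chi_curve // mulrA.
Qed.

Lemma sumdelta (f : 'I_n -> C) i : \sum_k (k == i)%:R * f k = f i.
Proof.
rewrite (bigD1 i) //= eqxx mul1r big1 ?addr0 // => k ki.
by rewrite (negPf ki) mul0r.
Qed.

Lemma deltaE (i k : 'I_n) : (delta_mx i 0 : 'cV[C]_n) k 0 = (k == i)%:R.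
Proof. by rewrite mxE andbT. Qed.

Lemma gen_func (v : 'cV[C]_n) : generic Hs v -> forall phi : 'I_n -> C,
  (forall t, nzt t -> \sum_k phi k * (invmx P *m (T t *m v)) k 0 = 0) ->
  forall x : 'cV[C]_n, \sum_k phi k * (invmx P *m x) k 0 = 0.
Proof.
move=> g phi h x; have [K [hs [c [Hh ->]]]] := g x.
rewrite mulmx_sumr.
under eq_bigr do rewrite summxE mulr_sumr.
rewrite exchange_big big1 // => j _.
under eq_bigr do rewrite -scalemxAr mxE mulrCA.
rewrite -mulr_sumr; have [t [nt ->]] := Hh j.
by rewrite h // mulr0.
Qed.

Lemma w_nz (v : 'cV[C]_n) : generic Hs v -> forall i, (invmx P *m v) i 0 != 0.
Proof.
move=> g i; apply/eqP => w0.
have H1 : forall t, nzt t ->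
    \sum_k (k == i)%:R * (invmx P *m (T t *m v)) k 0 = 0.
  by move=> t nt; rewrite sumdelta PinvT Dentry w0 mulr0.
have := gen_func g H1 (P *m delta_mx i 0).
by rewrite sumdelta (mulKmx Pu) deltaE eqxx => /eqP; rewrite oner_eq0.
Qed.

Lemma a_dist (v : 'cV[C]_n) : generic Hs v -> forall j l, j != l -> exists k, a j k != a l k.
Proof.
move=> g j l jl; apply: NNPP => hn.
have al : forall k, a j k = a l k.
  move=> k; apply/eqP; apply: negbNE; apply/negP => h; apply: hn; exists k; exact h.
pose phi k : C := (k == j)%:R * (invmx P *m v) l 0 - (k == l)%:R * (invmx P *m v) j 0.
have sphi (X : 'cV[C]_n) : \sum_k phi k * X k 0 =
    (invmx P *m v) l 0 * X j 0 - (invmx P *m v) j 0 * X l 0.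
  rewrite /phi; under eq_bigr do rewrite mulrBl -!mulrA.
  by rewrite sumrB !sumdelta.
have H1 : forall t, nzt t -> \sum_k phi k * (invmx P *m (T t *m v)) k 0 = 0.
  move=> t nt; rewrite sphi PinvT !Dentry.
  rewrite (_ : chi t j = chi t l); first by ring.
  by apply: eq_bigr => k _; rewrite al.
have := gen_func g H1 (P *m delta_mx j 0).
rewrite sphi (mulKmx Pu) !deltaE eqxx eq_sym (negPf jl) mulr1 mulr0 subr0.
by move/eqP; rewrite (negPf (w_nz g l)).
Qed.

Lemma rowmono (v : 'cV[C]_n) (A : 'M[C]_n) : generic Hs v -> no_fixed_vectors Hs ->
  (forall x, Defs.orbit Hs v x <-> exists y, Defs.orbit Hs v y /\ x = A *m y + 0) ->
  forall i j l, j != l ->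
  (invmx P *m A *m P) i j = 0 \/ (invmx P *m A *m P) i l = 0.
Proof.
move=> g nf Horb i j l jl.
pose d (p : 'I_n * 'I_n) (k : 'I_r) := if p.1 == p.2 then a p.1 k else a p.1 k - a p.2 k.
have dnz p : exists k, d p k != 0.
  case: p => j1 l1; rewrite /d /=; case: eqP => [_|/eqP h].
    exact: nofix_a.
  have [k hk] := a_dist g h; exists k; by rewrite subr_eq0.
have [lam hlam] := @LAM C _ _ d dnz.
pose m j := \sum_(k < r) lam k * a j k.
have minj j1 l1 : j1 != l1 -> m j1 != m l1.
  move=> h; have := hlam (j1, l1); rewrite /d /= (negPf h).
  rewrite (_ : \sum_k lam k * (a j1 k - a l1 k) = m j1 - m l1) ?subr_eq0 //.
  by rewrite /m -sumrB; apply: eq_bigr => k _; rewrite mulrBr.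
pose c j := (invmx P *m A *m P) i j * (invmx P *m v) j 0 * chi (fun _ => 1) j.
have b0 : (invmx P *m (0 : 'cV[C]_n)) i 0 = 0 by rewrite mulmx0 mxE.
have nv : forall z, z != 0 -> 0 + \sum_j c j * z ^ m j != 0.
  move=> z z0; have E := FyL v A 0 lam i ones_nz z0; rewrite b0 in E; rewrite -E.
  have [s [ns ->]] := Y1L Horb i (curve_nz lam ones_nz z0).
  apply: mulf_neq0; [exact: chi_neq0 i ns | exact: w_nz g i].
have gm jj : gam 0 c m (m jj) = c jj.
  rewrite /gam mulr0 add0r (big_pred1 jj) // => j1 /=.
  case: (eqVneq j1 jj) => [->|h]; first by rewrite !eqxx.
  by rewrite (negPf (minj _ _ h)).
have := OVmono nv (minj _ _ jl) (or_intror (ex_intro _ j erefl)) (or_intror (ex_intro _ l erefl)).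
rewrite !gm /c !chi1 !mulr1.
by case => /eqP; rewrite mulf_eq0 (negPf (w_nz g _)) orbF => /eqP; [left|right].
Qed.

Definition Epoly (i j : 'I_n) : {mpoly C[n * n + n]} :=
  \sum_(k < n) \sum_(l < n) (invmx P i k * P l j) *: 'X_(lshift n (mxvec_index k l)).

Lemma Epoly_eval (g : 'M[C]_n * 'cV[C]_n) i j :
  (Epoly i j).@[aff_coords g] = (invmx P *m g.1 *m P) i j.
Proof.
rewrite /Epoly (big_morph _ (mevalD _) (meval0 _)).
under eq_bigr do rewrite (big_morph _ (mevalD _) (meval0 _)).
rewrite exchange_big mxE; apply: eq_bigr => l _; rewrite mxE mulr_suml.
apply: eq_bigr => k _.
by rewrite mevalZ mevalXU /aff_coords row_mxEl mxvecE mulrAC.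
Qed.

Definition Z1 (g : 'M[C]_n * 'cV[C]_n) : Prop :=
  forall i j, i != j -> (invmx P *m g.1 *m P) i j = 0.
Definition Z2 (g : 'M[C]_n * 'cV[C]_n) : Prop :=
  \prod_i (invmx P *m g.1 *m P) i i = 0.

Lemma Z1closed : zariski_closed Z1.
Proof.
exists (fun p => exists i j, i != j /\ p = Epoly i j) => g; split.
  by move=> h p [i [j [ij ->]]]; rewrite Epoly_eval; exact: h.
by move=> h i j ij; rewrite -Epoly_eval; apply: h; exists i, j.
Qed.

Lemma Z2closed : zariski_closed Z2.
Proof.
exists (fun p => p = \prod_i Epoly i i) => g; split.
  move=> h p ->; rewrite (big_morph _ (mevalM _) (meval1 _)).
  by under eq_bigr do rewrite Epoly_eval.
move=> h; have := h _ erefl; rewrite (big_morph _ (mevalM _) (meval1 _)).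
by under eq_bigr do rewrite Epoly_eval.
Qed.

Lemma Hs1 : Hs 1%:M.
Proof. by exists (fun _ => 1); split; [exact: ones_nz | rewrite T1]. Qed.

Lemma orbit_v (v : 'cV[C]_n) : Defs.orbit Hs v v.
Proof. by exists 1%:M; split; [exact: Hs1 | rewrite mul1mx]. Qed.

Lemma comp_sub (v : 'cV[C]_n) g : generic Hs v -> no_fixed_vectors Hs ->
  identity_component (orbit_stabilizer Hs v) g -> Hs g.1 /\ g.2 = 0.
Proof.
move=> gen nf [Y [conn [YG [Y1 Yg]]]].
have G2 x : orbit_stabilizer Hs v x -> x.2 = 0.
  by case: x => A b [_ Horb]; exact: part1 nf Horb.
have Mono x : orbit_stabilizer Hs v x -> forall i j l, j != l ->
    (invmx P *m x.1 *m P) i j = 0 \/ (invmx P *m x.1 *m P) i l = 0.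
  move=> Gx; have := G2 x Gx; case: x Gx => A b [_ Horb] /= b0.
  by apply: rowmono gen nf _; rewrite -b0.
have cover x : Y x -> Z1 x \/ Z2 x.
  move=> Yx; have Gx := YG x Yx.
  case: (eqVneq (\prod_i (invmx P *m x.1 *m P) i i) 0) => [h|h]; [right|left] => //.
  move=> i j ij; move/prodf_neq0: h => /(_ i isT) hi.
  by case: (Mono x Gx i i j ij) => // e; rewrite e eqxx in hi.
have disj x : Y x -> Z1 x -> Z2 x -> False.
  move=> Yx Z1x Z2x; have [xu _] := YG x Yx.
  have Au : invmx P *m x.1 *m P \in unitmx by rewrite !unitmx_mul unitmx_inv Pu xu.
  have Ad : invmx P *m x.1 *m P = diag_mx (\row_i (invmx P *m x.1 *m P) i i).
    apply/matrixP => i j; rewrite [RHS]mxE [X in X *+ _]mxE.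
    case: (eqVneq i j) => [->|ij]; first by rewrite mulr1n.
    by rewrite Z1x // mulr0n.
  by move: Au; rewrite Ad unitmxE det_diag unitfE; under eq_bigr do rewrite mxE; rewrite Z2x eqxx.
case: (conn Z1 Z2 Z1closed Z2closed cover disj) => [allZ1|allZ2]; last first.
  have := allZ2 _ Y1; rewrite /Z2 /= mulmx1 (mulVmx Pu).
  by under eq_bigr do rewrite mxE eqxx mulr1n; rewrite big1_eq => /eqP; rewrite oner_eq0.
have Gg := YG g Yg; have g2 := G2 g Gg; split => //.
have dg := allZ1 g Yg.
clear Yg; case: g Gg g2 dg => A b [_ Horb] /= b0 dg; subst b.
have : Defs.orbit Hs v (A *m v + 0).
  by apply/Horb; exists v; split; [exact: orbit_v|].
case=> h [[s [ns ->]] E].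
have E' : A *m (T (fun _ => 1) *m v) + 0 = T s *m v by rewrite T1 mul1mx.
have Ad : invmx P *m A *m P = D s.
  apply/matrixP => i j; rewrite [RHS]mxE [X in X *+ _]mxE.
  case: (eqVneq i j) => [<-|ij]; last by rewrite dg // mulr0n.
  rewrite mulr1n; have := yeq E' i.
  rewrite mulmx0 mxE add0r (bigD1 i) //= big1 ?addr0; last first.
    by move=> jj ji; rewrite dg ?mul0r // eq_sym.
  rewrite chi1 mulr1 => /(mulIf (w_nz gen i)) //.
exists s; split => //; rewrite TE -Ad.
by rewrite !mulmxA (mulmxV Pu) mul1mx -mulmxA (mulmxV Pu) mulmx1.
Qed.

Opaque torus_elt.

Lemma conjE (d : 'rV[C]_n) k l :
  (P *m diag_mx d *m invmx P) k l = \sum_i P k i * (d 0 i * invmx P i l).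
Proof.
rewrite -mulmxA mul_diag_mx mxE; apply: eq_bigr => i _; by rewrite mxE.
Qed.

Lemma Tentry t k l : (T t) k l = \sum_i P k i * (chi t i * invmx P i l).
Proof. rewrite TE conjE; apply: eq_bigr => i _; by rewrite mxE. Qed.

Lemma TTv t s (x : 'cV[C]_n) : nzt t -> nzt s ->
  T t *m (T s *m x) = T (fun k => t k * s k) *m x.
Proof. move=> nt ns; rewrite -(TM nt ns); exact: mulmxA. Qed.

Lemma aff_actE (A : 'M[C]_n) (b x : 'cV[C]_n) : aff_act (A, b) x = A *m x + b.
Proof. by []. Qed.

Lemma HsG (v : 'cV[C]_n) g : Hs g.1 -> g.2 = 0 -> orbit_stabilizer Hs v g.
Proof.
case: g => A b /= [t [nt ->]] ->; split; first exact: Tunit.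
move=> w; split.
  move=> [h [[t' [nt' ->]] ->]].
  have nu : nzt (fun k => (t k)^-1 * t' k).
    by move=> k; rewrite mulf_neq0 ?invr_eq0.
  exists (T (fun k => (t k)^-1 * t' k) *m v); split.
    by exists (T (fun k => (t k)^-1 * t' k)); split => //; exists (fun k => (t k)^-1 * t' k).
  have E1 : T t *m (T (fun k => (t k)^-1 * t' k) *m v) + 0 = T t' *m v.
    rewrite addr0; apply: etrans (TTv v nt nu) _.
    apply: (congr1 (fun M => M *m v)); apply: T_ext => k.
    by rewrite mulrA mulfV ?mul1r.
  exact: (esym E1).
move=> [x [[h [[t' [nt' ->]] ->]] ->]].
have nu : nzt (fun k => t k * t' k) by move=> k; rewrite mulf_neq0.
exists (T (fun k => t k * t' k)); split; first by exists (fun k => t k * t' k).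
have E1 : T t *m (T t' *m v) + 0 = T (fun k => t k * t' k) *m v.
  by rewrite addr0; apply: TTv.
exact: E1.
Qed.

Lemma Y_conn : zariski_connected (fun x : 'M[C]_n * 'cV[C]_n => Hs x.1 /\ x.2 = 0).
Proof.
move=> Z1' Z2' [F1 hF1] [F2 hF2] cover disj.
case: (classic (forall g, Hs g.1 /\ g.2 = 0 -> Z1' g)) => [h|h]; [by left|right].
have [y1 hy1] := not_all_ex_not _ _ h.
have [Yy1 nZ1] := imply_to_and _ _ hy1.
have [p [Fp hp]] : exists p, F1 p /\ p.@[aff_coords y1] != 0.
  apply: NNPP => hn; apply: nZ1; apply/hF1 => p Fp; apply: NNPP => pn.
  by apply: hn; exists p; split => //; apply/eqP.
move=> y Yy; apply: NNPP => nZ2.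
have [q [Fq hq]] : exists q, F2 q /\ q.@[aff_coords y] != 0.
  apply: NNPP => hn; apply: nZ2; apply/hF2 => q Fq; apply: NNPP => pn.
  by apply: hn; exists q; split => //; apply/eqP.
clear h hy1 nZ1 nZ2.
case: y1 Yy1 hp => A1 b1 [[t1 [nt1 /= EA]] /= Eb] hp; subst A1 b1.
case: y Yy hq => A2 b2 [[t2 [nt2 /= EA]] /= Eb] hq; subst A2 b2.
pose u z k := t1 k + (t2 k - t1 k) * z.
pose U k : {poly C} := (t1 k)%:P + (t2 k - t1 k) *: 'X.
have Uz z k : (U k).[z] = u z k by rewrite hornerD hornerC hornerZ hornerX.
pose Q := \prod_k U k.
have UQ z k : Q.[z] != 0 -> (U k).[z] != 0.
  by rewrite horner_prod => /prodf_neq0; apply.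
have Qz z : Q.[z] != 0 -> nzt (u z) by move=> zQ k; rewrite -Uz UQ.
have repP (pp : {mpoly C[n * n + n]}) : Rep Q (fun z => pp.@[aff_coords (T (u z), 0)]).
  apply: (Rep_ext (f := fun z => \sum_(m <- msupp pp) pp@_m *
       \prod_i (aff_coords (T (u z), 0) i) ^+ m i)) => [z|]; first by rewrite mevalE.
  apply: Rep_sum => m; apply: Rep_mul; first exact: Rep_const.
  apply: Rep_prod => i; apply: Rep_expn; rewrite /aff_coords /=.
  rewrite -(splitK i); case: (split i) => j /=.
    case/mxvec_indexP: j => k l.
    apply: (Rep_ext (f := fun z => \sum_i0 P k i0 * ((\prod_k0 (U k0).[z] ^ a i0 k0) * invmx P i0 l))).
      move=> z; rewrite row_mxEl mxvecE Tentry; apply: eq_bigr => i0 _; congr (_ * (_ * _)).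
      by apply: eq_bigr => k0 _; rewrite Uz.
    apply: Rep_sum => i0; apply: Rep_mul; first exact: Rep_const.
    apply: Rep_mul; last exact: Rep_const.
    apply: Rep_prod => k0; apply: Rep_exprz => z; exact: UQ.
  apply: (Rep_ext (f := fun _ => 0)); last exact: Rep_const.
  by move=> z; rewrite row_mxEr !mxE.
have cov z : Q.[z] != 0 ->
    p.@[aff_coords (T (u z), 0)] = 0 \/ q.@[aff_coords (T (u z), 0)] = 0.
  move=> zQ; case: (cover (T (u z), 0)).
  - by split => //; exists (u z); split => //; exact: Qz.
  - by move=> h; left; exact: (hF1 _).1 h p Fp.
  - by move=> h; right; exact: (hF2 _).1 h q Fq.
have [D1 [p1 [a1 b1]]] := repP p.
have [D2 [p2 [a2 b2]]] := repP q.
have W : p1 * p2 * Q = 0.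
  apply: PZ => z; rewrite !hornerM; case: (eqVneq Q.[z] 0) => [->|zQ]; first by rewrite mulr0.
  rewrite -(b1 z zQ) -(b2 z zQ).
  by case: (cov z zQ) => ->; rewrite ?mulr0 ?mul0r.
have u0 : forall k, u 0 k = t1 k by move=> k; rewrite /u mulr0 addr0.
have u1 : forall k, u 1 k = t2 k by move=> k; rewrite /u mulr1 addrC subrK.
have Q0 : Q.[0] != 0.
  by rewrite horner_prod; apply/prodf_neq0 => k _; rewrite Uz u0.
have Q1 : Q.[1] != 0.
  by rewrite horner_prod; apply/prodf_neq0 => k _; rewrite Uz u1.
have p10 : p1.[0] != 0.
  rewrite -(b1 0 Q0); apply: mulf_neq0; first exact: a1.
  exact: (eq_ind_r (fun x => x != 0) hp (congr1 (fun M => p.@[aff_coords (M, 0)]) (T_ext u0))).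
have p21 : p2.[1] != 0.
  rewrite -(b2 1 Q1); apply: mulf_neq0; first exact: a2.
  exact: (eq_ind_r (fun x => x != 0) hq (congr1 (fun M => q.@[aff_coords (M, 0)]) (T_ext u1))).
move/eqP: W; rewrite !mulf_eq0 => /orP [/orP [] |] /eqP E.
- by move: p10; rewrite E horner0 eqxx.
- by move: p21; rewrite E horner0 eqxx.
- by move: Q0; rewrite E horner0 eqxx.
Qed.
End Main.

Theorem theorem3p9 (R : realType) (n : nat) (H : 'M[R[i]]_n -> Prop)
    (v : 'cV[R[i]]_n) :
  is_torus H -> no_fixed_vectors H ->
  (forall g, orbit_stabilizer H v g -> g.2 = 0) /\
  (generic H v ->
     forall g, identity_component (orbit_stabilizer H v) g <-> (H g.1 /\ g.2 = 0)).
Proof.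
move=> [r [P [a [Pu Hiff]]]] nf.
have EH : H = Hs P a.
  apply: functional_extensionality => M; apply: propositional_extensionality; exact: Hiff.
subst H.
split.
  move=> [A b] [_ Horb]; exact: (part1 Pu nf Horb).
move=> gen g; split; first exact: (comp_sub Pu gen nf).
move=> [h1 h2]; exists (fun x => Hs P a x.1 /\ x.2 = 0); split; first exact: Y_conn.
split; first by move=> x [hx1 hx2]; exact: (HsG Pu v hx1 hx2).
split; first by split; [exact: (Hs1 a Pu)|].
by split.
Qed.
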